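(* Let $d\geq 1$ and let $\mathcal{F}$ be a sample of the wired uniform spanning forest of $\mathbb{Z}^d$. Let $H$ be a (possibly infinite) set of edges of $\mathbb{Z}^d$ that does not contain a cycle. Then there is an ordering $\{e_n\}_{n\geq 1}$ of $H$ such that for all $n\geq 1$ and any partition of $\{e_1,\dots,e_{n-1}\}$ into two sets $A$ and $B$ we have $$\mathbb{P}\big(e_n\in\mathcal{F}\ \big|\ A\subseteq\mathcal{F},\ B\cap\mathcal{F}=\emptyset\big)\geq\frac{1}{2d}.$$
   Context: The wired uniform spanning forest (WUSF) of $\mathbb{Z}^d$ is the weak limit of uniform spanning trees on an exhaustion of $\mathbb{Z}^d$ with wired boundary conditions. *)

(* Defs.v *)
From HB Require Import structures.
From mathcomp Require Import all_boot all_order all_algebra.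
From mathcomp Require Import finmap.
From mathcomp Require Import all_classical all_reals all_analysis.

Set Implicit Arguments.
Unset Strict Implicit.
Unset Printing Implicit Defensive.

Import Order.TTheory GRing.Theory Num.Theory.
Import numFieldNormedType.Exports.
Local Open Scope fset_scope.
Local Open Scope ring_scope.
Local Open Scope classical_set_scope.

Definition pt (d : nat) := {ffun 'I_d -> int}.

Definition shiftp d (x : pt d) (i : 'I_d) : pt d := [ffun j => x j + (j == i)%:Z].
Definition unshiftp d (x : pt d) (i : 'I_d) : pt d := [ffun j => x j - (j == i)%:Z].

(* Edges of Z^d: the edge (x, i) joins x and x + e_i.  Every nearest-neighbour
   edge of Z^d has exactly one such representation. *)
Definition edge (d : nat) := (pt d * 'I_d)%type.

Definition zends d (e : edge d) : pt d * pt d := (e.1, shiftp e.1 e.2).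

Inductive conn (E V : Type) (ends : E -> V * V) (S : E -> Prop) : V -> V -> Prop :=
| conn_refl v : conn ends S v v
| conn_step u v w e : S e -> (ends e = (u, v) \/ ends e = (v, u)) ->
    conn ends S v w -> conn ends S u w.

Definition acyclic (E V : Type) (ends : E -> V * V) (S : E -> Prop) : Prop :=
  forall e, S e -> ~ conn ends (fun f => S f /\ f <> e) (ends e).1 (ends e).2.

Definition inbox d (n : nat) (x : pt d) : bool := [forall i, `|x i| <= n%:Z].

Definition boxpts d (n : nat) : {fset pt d} :=
  [fset x in [seq [ffun i => (val (f i))%:Z - n%:Z] | f : {ffun 'I_d -> 'I_(n.*2.+1)}]].

Definition boxedges d (n : nat) : {fset edge d} :=
  [fset e in [seq (x, i) | x <- boxpts d n, i <- enum 'I_d]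
          ++ [seq (unshiftp x i, i) | x <- boxpts d n, i <- enum 'I_d]].

(* Wired graph G_n^*: the complement of the box is identified to a single vertex None. *)
Definition wv d (n : nat) (x : pt d) : option (pt d) := if inbox n x then Some x else None.
Definition wends d (n : nat) (e : edge d) : option (pt d) * option (pt d) :=
  (wv n (zends e).1, wv n (zends e).2).

Definition wired_spanning_tree d (n : nat) (T : {fset edge d}) : Prop :=
  (T `<=` boxedges d n)%fset /\
  acyclic (wends n) (fun e => e \in T) /\
  (forall x, x \in boxpts d n -> conn (wends n) (fun e => e \in T) (Some x) None).

Definition wsts d (n : nat) : {fset {fset edge d}} :=
  [fset T in fpowerset (boxedges d n) | `[< wired_spanning_tree n T >]].

Definition ust_cyl (R : realType) d (n : nat) (A B : {fset edge d}) : R :=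
  (#|` [fset T in wsts d n | (A `<=` T)%fset && (B `&` T == fset0)%fset] |%:R)
  / (#|` wsts d n |%:R).

(* p is the law of the wired uniform spanning forest of Z^d, given through its values
   p A B = P(A ⊆ F, B ∩ F = ∅) on cylinder events (A, B finite): it is the weak limit of the
   wired USTs on the exhaustion by boxes [-n,n]^d. *)
Definition is_WUSF (R : realType) d (p : {fset edge d} -> {fset edge d} -> R) : Prop :=
  forall A B : {fset edge d}, (fun n : nat => ust_cyl R n A B) @ \oo --> p A B.

(* Main.v *)
Require Import Defs.
From HB Require Import structures.
From mathcomp Require Import all_boot all_order all_algebra.
From mathcomp Require Import finmap.
From mathcomp Require Import all_classical all_reals all_analysis.
Import Order.TTheory GRing.Theory Num.Theory.
Import numFieldNormedType.Exports.
Local Open Scope ring_scope.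
From Stdlib Require Import Classical.
From mathcomp Require Import zify.

Set Implicit Arguments.
Unset Strict Implicit.

Section Part1.

Section Conn.
Variables (E V : Type) (ends : E -> V * V).

Definition joins (e : E) (u v : V) := ends e = (u, v) \/ ends e = (v, u).
Definition touch (a : V) (e : E) := (ends e).1 = a \/ (ends e).2 = a.

Lemma conn_trans S a b c : conn ends S a b -> conn ends S b c -> conn ends S a c.
Proof.
elim=> [//|u v w e Se He _ IH] Hc; exact: (conn_step Se He (IH Hc)).
Qed.

Lemma conn1 S e u v : S e -> joins e u v -> conn ends S u v.
Proof. by move=> Se He; apply: (conn_step Se He); apply: conn_refl. Qed.

Lemma joins_sym e u v : joins e u v -> joins e v u.
Proof. by case=> ?; [right|left]. Qed.

Lemma conn_sym S a b : conn ends S a b -> conn ends S b a.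
Proof.
elim=> [v|u v w e Se He _ IH]; first exact: conn_refl.
by apply: (conn_trans IH); apply: (conn1 Se); apply: joins_sym.
Qed.

Lemma conn_mono (S S' : E -> Prop) a b : (forall e, S e -> S' e) ->
  conn ends S a b -> conn ends S' a b.
Proof.
move=> HS; elim=> [v|u v w e Se He _ IH]; first exact: conn_refl.
exact: (conn_step (HS _ Se) He IH).
Qed.

Lemma conn_adjoin S e x y p q : ends e = (x, y) ->
  conn ends (fun g => S g \/ g = e) p q ->
  conn ends S p q \/ (conn ends S p x /\ conn ends S y q)
    \/ (conn ends S p y /\ conn ends S x q).
Proof.
move=> Hxy; elim=> [v|u v w g Sg Hg _ IH]; first by left; apply: conn_refl.
case: Sg Hg => [Sg Hg|-> Hg].
  have Huv : conn ends S u v by apply: (conn1 Sg).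
  case: IH => [H|[[H1 H2]|[H1 H2]]].
  - by left; apply: conn_trans H.
  - by right; left; split=> //; apply: conn_trans H1.
  - by right; right; split=> //; apply: conn_trans H1.
rewrite Hxy in Hg.
case: Hg IH => [[<- <-]|[<- <-]] IH.
  case: IH => [H|[[H1 H2]|[H1 H2]]].
  - by right; left; split=> //; apply: conn_refl.
  - by right; left; split=> //; apply: conn_refl.
  - by left.
case: IH => [H|[[H1 H2]|[H1 H2]]].
- by right; right; split=> //; apply: conn_refl.
- by left.
- by right; right; split=> //; apply: conn_refl.
Qed.

Lemma acyclic_anti (S S' : E -> Prop) : acyclic ends S ->
  (forall g, S' g -> S g) -> acyclic ends S'.
Proof.
move=> HS sub g Sg C; apply: (HS g (sub _ Sg)).
by apply: conn_mono C => f [Sf Nf]; split=> //; apply: sub.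
Qed.

Lemma acyclic_add S e x y : acyclic ends S -> ~ S e -> ends e = (x, y) ->
  ~ conn ends S x y -> acyclic ends (fun g => S g \/ g = e).
Proof.
move=> HS NSe He NC g Sg C.
have [gE|gNE] := classic (g = e).
  subst g; apply: NC; rewrite He /= in C.
  by apply: conn_mono C => f [[//|->] ]; rewrite /=; move=> ?; exfalso.
have Sg' : S g by case: Sg.
have C' : conn ends (fun f => (S f /\ f <> g) \/ f = e) (ends g).1 (ends g).2.
  by apply: conn_mono C => f [[Sf|->] Nf]; [left|right].
case: (conn_adjoin He C') => [H|[[H1 H2]|[H1 H2]]].
- exact: (HS g Sg' H).
- apply: NC; have Hg : joins g (ends g).1 (ends g).2 by left; case: (ends g).
  apply: (conn_trans (conn_sym (conn_mono (fun f => @proj1 _ _) H1))).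
  apply: (conn_step Sg' Hg).
  exact: (conn_sym (conn_mono (fun f => @proj1 _ _) H2)).
- apply: NC; have Hg : joins g (ends g).2 (ends g).1 by right; case: (ends g).
  apply: (conn_trans (conn_mono (fun f => @proj1 _ _) H2)).
  apply: (conn_step Sg' Hg).
  exact: (conn_mono (fun f => @proj1 _ _) H1).
Qed.

Lemma conn_avoid_self S a x b :
  conn ends (fun g => S g /\ ~ touch a g) x b -> x = a -> x = b.
Proof.
case=> [//|u v w e [Se Nt] He _] Hua; exfalso; apply: Nt; subst u.
by rewrite /touch; case: He => ->; [left|right].
Qed.

Lemma first_edge S a x b : conn ends S x b -> b <> a ->
  conn ends (fun g => S g /\ ~ touch a g) x b \/
  exists f u, S f /\ joins f a u /\ conn ends (fun g => S g /\ ~ touch a g) u b.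
Proof.
move=> C Nba; elim: C Nba => [v|u v w e Se He _ IH] Nba; first by left; apply: conn_refl.
case: (IH Nba) => [H|H]; last by right.
have [vE|vNE] := classic (v = a).
  by subst v; exfalso; apply: Nba; symmetry; apply: (conn_avoid_self H).
have [T|NT] := classic (touch a e).
  have ua : u = a.
    by case: T; case: He => -> /= ? //; exfalso; apply: vNE.
  by subst u; right; exists e, v.
by left; apply: (conn_step (conj Se NT) He H).
Qed.

Lemma exchange S e a w : acyclic ends S -> ~ S e -> joins e a w -> a <> w ->
  conn ends S a w ->
  exists f, [/\ S f, touch a f, f <> e,
    acyclic ends (fun g => (S g /\ g <> f) \/ g = e) &
    forall x y, conn ends S x y -> conn ends (fun g => (S g /\ g <> f) \/ g = e) x y].
Proof.
move=> HS NSe Je Naw C.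
case: (first_edge C (nesym Naw)) => [H|[f [u [Sf [Jf Cu]]]]].
  by exfalso; apply: Naw; apply: (conn_avoid_self H).
have Tf : touch a f by rewrite /touch; case: Jf => ->; [left|right].
have fNe : f <> e by move=> fe; apply: NSe; rewrite -fe.
have Cu' : conn ends (fun g => S g /\ g <> f) u w.
  by apply: conn_mono Cu => g [Sg Ng]; split=> // gf; apply: Ng; rewrite gf.
have NC : ~ conn ends (fun g => S g /\ g <> f) a w.
  move=> Caw; have Cau := conn_trans Caw (conn_sym Cu').
  by apply: (HS f Sf); case: Jf => ->; [|apply: conn_sym].
exists f; split=> //.
  case: Je => Je.
    by apply: (acyclic_add (acyclic_anti HS (fun g => @proj1 _ _))) Je NC => -[].
  apply: (acyclic_add (acyclic_anti HS (fun g => @proj1 _ _))) Je _ => //.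
    by case.
  by move=> /conn_sym.
set S' := fun g => _.
have Cau : conn ends S' a u.
  apply: (conn_step (or_intror erefl) Je).
  by apply: conn_sym; apply: conn_mono Cu' => g Hg; left.
have Cua := conn_sym Cau.
move=> x y; elim=> [v|p q r g Sg Hg _ IH]; first exact: conn_refl.
apply: conn_trans IH.
have [gf|gNf] := classic (g = f); last by apply: conn1 Hg; left.
subst g; case: Hg => Hg; case: Jf => Jf; rewrite Jf in Hg; case: Hg => <- <- //.
Qed.

End Conn.

End Part1.

Section Part2.

Local Open Scope fset_scope.

Lemma unshift_shift d (x : pt d) i : unshiftp (shiftp x i) i = x.
Proof. by apply/ffunP => j; rewrite !ffunE addrK. Qed.

Lemma shift_neq d (x : pt d) i : shiftp x i <> x.
Proof. move=> H; have := congr1 (fun f : pt d => f i) H; rewrite ffunE eqxx /=; lia. Qed.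

Definition edges_at d (v : pt d) : seq (edge d) :=
  [seq (v, i) | i <- enum 'I_d] ++ [seq (unshiftp v i, i) | i <- enum 'I_d].

Lemma size_edges_at d (v : pt d) : size (edges_at v) = (d + d)%N.
Proof. by rewrite size_cat !size_map -enumT size_enum_ord. Qed.

Lemma edges_atP d v (g : edge d) : (zends g).1 = v \/ (zends g).2 = v -> g \in edges_at v.
Proof.
case: g => x i /= [->|<-]; rewrite mem_cat; apply/orP; [left|right];
  apply/mapP; exists i; rewrite ?mem_enum ?unshift_shift //.
Qed.

Lemma inbox_boxpts d n (x : pt d) : inbox n x -> x \in boxpts d n.
Proof.
move=> /forallP Hx; rewrite /boxpts inE.
have Hi : forall i, (absz (x i + n%:Z)%R < n.*2.+1)%N.
  by move=> i; have := Hx i; lia.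
apply/mapP; exists [ffun i => Ordinal (Hi i)]; first by rewrite mem_enum.
by apply/ffunP => i; rewrite !ffunE /=; have := Hx i; lia.
Qed.

Lemma wv_some d n (x y : pt d) : wv n x = Some y -> x = y /\ inbox n x.
Proof. by rewrite /wv; case: ifP => // H [<-]. Qed.

Lemma wv_in d n (x : pt d) : inbox n x -> wv n x = Some x.
Proof. by rewrite /wv => ->. Qed.

Lemma edge_box d n (v : pt d) (e : edge d) : inbox n v ->
  (zends e).1 = v \/ (zends e).2 = v -> e \in boxedges d n.
Proof.
move=> /inbox_boxpts Hv; rewrite /boxedges inE /=.
case: e => x i /= [->|E]; apply/orP; [left|right]; rewrite inE /=.
  by apply/allpairsP; exists (v, i) => /=; rewrite mem_enum.
apply/allpairsP; exists (v, i) => /=; rewrite mem_enum -E unshift_shift.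
by rewrite E.
Qed.

Lemma wsts_iff d n (T : {fset edge d}) : T \in wsts d n <-> wired_spanning_tree n T.
Proof.
rewrite /wsts !inE /=; split; first by case/andP => _ /asboolP.
move=> H; apply/andP; split; last exact/asboolP.
have := fpowersetE (boxedges d n) T; rewrite /= => ->.
by case: H.
Qed.

Lemma wv_conn d n (T : {fset edge d}) z : wired_spanning_tree n T ->
  conn (wends n) (fun g => g \in T) (wv n z) None.
Proof.
move=> [_ [_ Hc]]; rewrite /wv; case: ifP => H; last exact: conn_refl.
exact/Hc/inbox_boxpts.
Qed.

Lemma tree_exchange d n (v : pt d) (e : edge d) T :
  inbox n v -> (zends e).1 = v \/ (zends e).2 = v -> T \in wsts d n -> e \notin T ->
  exists f, [/\ f \in T, (zends f).1 = v \/ (zends f).2 = v, f <> e &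
             e |` (T `\ f) \in wsts d n].
Proof.
move=> Hv He /wsts_iff HT eNT; have [Tsub [Tac Tconn]] := HT.
have [z [Je Nw]] : exists z, joins (wends n) e (Some v) (wv n z) /\ Some v <> wv n z.
  case: e He {eNT} => x i /= [->|E].
    exists (shiftp v i); split; first by left; rewrite /wends /= (wv_in Hv).
    by move=> /esym /wv_some [/shift_neq].
  exists x; split; first by right; rewrite /wends /= E (wv_in Hv).
  by move=> /esym /wv_some [xv _]; apply: (@shift_neq d x i); rewrite E.
have Cw : conn (wends n) (fun g => g \in T) (Some v) (wv n z).
  apply: conn_trans (Tconn v (inbox_boxpts Hv)) _.
  exact/conn_sym/wv_conn.
have [f [Sf Tf fNe Hac Hc]] := exchange Tac (negP eNT) Je Nw Cw.
exists f; split => //.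
  by case: Tf => /wv_some [-> _]; [left|right].
apply/wsts_iff; split; [|split].
- apply/fsubsetP => g; rewrite in_fset1U in_fsetD1 => /orP [/eqP -> | /andP [_ gT]].
    exact: edge_box Hv He.
  exact: (fsubsetP Tsub).
- apply: acyclic_anti Hac _ => g; rewrite !inE => /orP[/eqP ->|/andP[/eqP gf gT]].
    by right.
  by left.
- move=> x Hx; apply: conn_mono (Hc _ _ (Tconn x Hx)) => g [[gT gf]|->]; rewrite !inE.
    by rewrite gT andbT; apply/orP; right; apply/eqP.
  by rewrite eqxx.
Qed.

End Part2.

Section Part3.

Local Open Scope fset_scope.

Lemma cover (A B : choiceType) (X Y : {fset A}) (fs : seq B) (h : B -> A -> A) :
  (forall T, T \in X -> exists f, f \in fs /\ exists T', T' \in Y /\ T = h f T') ->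
  (#|` X| <= size fs * #|` Y|)%N.
Proof.
elim: fs X => [|f fs IH] X HX.
  rewrite mul0n leqn0 cardfs_eq0; apply/eqP/fsetP => T; rewrite inE.
  by apply/negP => /HX [f []]; rewrite in_nil.
set I := [fset h f T' | T' in Y].
have sub : X `<=` I `|` (X `\` I).
  by apply/fsubsetP => T TX; rewrite in_fsetU in_fsetD TX andbT orbN.
apply: leq_trans (fsubset_leq_card sub) _.
rewrite cardfsU; apply: leq_trans (leq_subr _ _) _.
rewrite mulSn leq_add //.
  by apply: leq_trans (leq_imfset_card _ _ _) _.
apply: IH => T; rewrite in_fsetD => /andP [TnI TX].
have [g [gin [T' [T'Y TE]]]] := HX T TX.
move: gin; rewrite inE => /orP [/eqP gf|gfs]; last by exists g; split=> //; exists T'.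
subst T g.
have : h f T' \in I by apply: in_imfset. by rewrite (negPf TnI).
Qed.

Lemma key_count d (W : {fset {fset edge d}}) (v : pt d) (e : edge d) (A B : {fset edge d}) :
  (zends e).1 = v \/ (zends e).2 = v ->
  (forall g, g \in A `|` B -> (zends g).1 <> v /\ (zends g).2 <> v) ->
  (forall T, T \in W -> e \notin T -> exists f, [/\ f \in T, (zends f).1 = v \/ (zends f).2 = v, f <> e &
             e |` (T `\ f) \in W]) ->
  (#|` [fset T in W | (A `<=` T) && (B `&` T == fset0)]| <=
   (d + d) * #|` [fset T in W | (e |` A `<=` T) && (B `&` T == fset0)]|)%N.
Proof.
move=> He HAB Hex.
set S := [fset T in W | _]; set S1 := [fset T in W | _].
set S0 := [fset T in S | e \notin T].
set fs := [seq g <- edges_at v | g != e].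
have Hsz : (size fs < d + d)%N.
  have : (0 < count (pred1 e) (edges_at v))%N by rewrite -has_count has_pred1 edges_atP.
  rewrite size_filter -(size_edges_at v) -(count_predC (pred1 e)).
  rewrite (@eq_count _ (fun g => g != e) (predC (pred1 e))) //; lia.
have H0 : (#|` S0| <= size fs * #|` S1|)%N.
  apply: (cover (h := fun f T' => f |` (T' `\ e))) => T.
  rewrite !inE => /andP [/andP [TW /andP [AT BT]] eT].
  have [f [fT fv fe T'W]] := Hex T TW eT.
  exists f; split.
    by rewrite mem_filter edges_atP // andbT; apply/eqP.
  exists (e |` (T `\ f)); split.
    rewrite !inE /= T'W /=; apply/andP; split.
      apply/fsubsetP => g; rewrite in_fset1U => /orP [/eqP ->|gA]; first exact: fset1U1.
      rewrite in_fset1U in_fsetD1 (fsubsetP AT) // andbT; apply/orP; right; apply/eqP => gf.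
      have := HAB g; rewrite in_fsetU gA => /(_ isT) [h1 h2].
      by subst g; case: fv.
    apply/eqP/fsetP => g; rewrite in_fsetI in_fset1U in_fsetD1 in_fset0.
    apply/negP => /andP [gB /orP [/eqP ge|/andP [_ gT]]].
      have := HAB g; rewrite in_fsetU gB orbT => /(_ isT) [h1 h2].
      by subst g; case: He.
    by move/eqP/fsetP: BT => /(_ g); rewrite in_fsetI gB gT in_fset0.
  apply/fsetP => g; rewrite in_fset1U in_fsetD1 in_fset1U in_fsetD1.
  have [->|gf] := eqVneq g f; first by rewrite fT.
  have [->|ge] := eqVneq g e; first by rewrite (negPf eT).
  by [].
have sub : S `<=` S0 `|` S1.
  apply/fsubsetP => T TS; rewrite in_fsetU; move: (TS); rewrite inE => /andP [TW /andP [AT BT]].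
  case: (boolP (e \in T)) => eT; last by apply/orP; left; rewrite !inE /= TW AT BT eT.
  apply/orP; right; rewrite !inE /= TW BT andbT; apply/fsubsetP => g.
  by rewrite in_fset1U => /orP [/eqP ->|gA] //; apply: (fsubsetP AT).
apply: leq_trans (fsubset_leq_card sub) _.
rewrite cardfsU; apply: leq_trans (leq_subr _ _) _.
apply: leq_trans (leq_add H0 (leqnn _)) _.
rewrite addnC -mulSn leq_mul2r; apply/orP; right; exact: Hsz.
Qed.

End Part3.

Section Part4.

Local Open Scope classical_set_scope.

Lemma ust_ineq (R : realType) d n (v : pt d) (e : edge d) (A B : {fset edge d}) :
  (1 <= d)%N -> inbox n v -> (zends e).1 = v \/ (zends e).2 = v ->
  (forall g, g \in (A `|` B)%fset -> (zends g).1 <> v /\ (zends g).2 <> v) ->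
  (2 * d)%:R^-1 * ust_cyl R n A B <= ust_cyl R n (e |` A)%fset B.
Proof.
move=> d1 Hv He HAB; rewrite /ust_cyl.
have := key_count He HAB (fun T TW eT => tree_exchange Hv He TW eT).
set a := #|` _|; set b := #|` _|; set w := #|` _| => Hab.
rewrite mulrA; apply: ler_wpM2r; first by rewrite invr_ge0 ler0n.
have d2 : (0 : R) < (2 * d)%:R by rewrite ltr0n; lia.
rewrite ler_pdivrMl // -natrM ler_nat.
by rewrite mul2n -addnn.
Qed.

Lemma bound_box d (v : pt d) : exists n0, forall n, (n0 <= n)%N -> inbox n v.
Proof.
exists (\max_(i < d) `|v i|%N)%N => n Hn; apply/forallP => i.
rewrite -abszE lez_nat; apply: leq_trans Hn; exact: (@leq_bigmax _ (fun i => `|v i|%N) i).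
Qed.

Lemma step_ineq (R : realType) d (p : {fset edge d} -> {fset edge d} -> R)
  (v : pt d) (e : edge d) (A B : {fset edge d}) :
  (1 <= d)%N -> is_WUSF p -> (zends e).1 = v \/ (zends e).2 = v ->
  (forall g, g \in (A `|` B)%fset -> (zends g).1 <> v /\ (zends g).2 <> v) ->
  (2 * d)%:R^-1 * p A B <= p (e |` A)%fset B.
Proof.
move=> d1 Hp He HAB; have [n0 Hn0] := bound_box v.
have cu : (fun n => (2 * d)%:R^-1 * ust_cyl R n A B) @ \oo --> (2 * d)%:R^-1 * p A B.
  by apply: cvgMl_tmp; apply: Hp.
apply: (ler_cvg_to cu (Hp _ _)).
near=> n; apply: (ust_ineq _ d1 _ He HAB); apply: Hn0. near: n. by exists n0.
Unshelve. all: end_near.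
Qed.

End Part4.

Section Part5.


Section Enum.
Variables (d : nat) (H : edge d -> Prop) (x0 : edge d).
Hypothesis Hac : acyclic (@zends d) H.

Definition touched (L : seq (edge d)) (x : pt d) :=
  exists2 g, g \in L & ((zends g).1 = x \/ (zends g).2 = x).
Definition one L h := (touched L (zends h).1 /\ ~ touched L (zends h).2) \/
                      (~ touched L (zends h).1 /\ touched L (zends h).2).
Definition freshc L h := forall x, conn (@zends d) H (zends h).1 x -> ~ touched L x.
Definition elig L h := [/\ H h, h \notin L & one L h \/ freshc L h].
Definition code_ok L n := `[< exists h, pickle_inv n = Some h /\ elig L h >].

Definition next L : option (edge d) :=
  match pselect (exists n, code_ok L n) with
  | left ex => pickle_inv (ex_minn ex)
  | right _ => None
  end.

Lemma next_some L h : next L = Some h ->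
  elig L h /\ forall h', elig L h' -> (choice.pickle h <= choice.pickle h')%N.
Proof.
rewrite /next; case: pselect => [ex|//].
case: (ex_minnP ex) => mm /asboolP [h0 [Hm E]] Hmin; rewrite Hm => -[<-].
split=> // h' Eh'; have := (@pickle_invK (edge d) mm); rewrite Hm /= => ->.
by apply: Hmin; apply/asboolP; exists h'; rewrite pickleK_inv.
Qed.

Lemma next_none L : next L = None -> forall h, ~ elig L h.
Proof.
rewrite /next; case: pselect => [ex|nex].
  by case: (ex_minnP ex) => mm /asboolP [h0 [Hm E]] _; rewrite Hm.
move=> _ h Eh; apply: nex; exists (choice.pickle h); apply/asboolP; exists h.
by rewrite pickleK_inv.
Qed.

Definition stepL L := if next L is Some h then rcons L h else L.
Definition st k := iter k stepL [::].

Lemma st_succ k : st k.+1 = stepL (st k). Proof. by []. Qed.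

Definition Inv L := [/\ (forall g, g \in L -> H g), uniq L &
  forall x y, touched L x -> touched L y -> conn (@zends d) H x y ->
     conn (@zends d) (fun g => g \in L) x y].

Lemma joins_z (h : edge d) : joins (@zends d) h (zends h).1 (zends h).2.
Proof. by left; case: (zends h). Qed.

Lemma both_touched L h : Inv L -> H h -> h \notin L ->
  touched L (zends h).1 -> touched L (zends h).2 -> False.
Proof.
move=> [HL _ HC] Hh hL t1 t2.
have C := HC _ _ t1 t2 (conn1 Hh (joins_z h)).
apply: (Hac Hh); apply: conn_mono C => g gL; split; first exact: HL.
by move=> gh; subst g; rewrite gL in hL.
Qed.

Lemma touched_rcons L h x : touched (rcons L h) x <->
  touched L x \/ ((zends h).1 = x \/ (zends h).2 = x).
Proof.
split.
  move=> [g]; rewrite mem_rcons in_cons => /orP [/eqP ->|gL] Hg; first by right.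
  by left; exists g.
case=> [[g gL Hg]|Hh]; first by exists g => //; rewrite mem_rcons in_cons gL orbT.
by exists h => //; rewrite mem_rcons in_cons eqxx.
Qed.

Lemma touched_cat L t x : touched L x -> touched (L ++ t) x.
Proof. by move=> [g gL Hg]; exists g => //; rewrite mem_cat gL. Qed.

Lemma Inv_step L h : Inv L -> elig L h -> Inv (rcons L h).
Proof.
move=> IL [Hh hL He]; have [HL uL CL] := IL.
split.
- by move=> g; rewrite mem_rcons in_cons => /orP [/eqP ->|/HL].
- by rewrite rcons_uniq hL.
set a := (zends h).1; set b := (zends h).2.
set C' := conn (@zends d) (fun g => g \in rcons L h).
have mono x y : conn (@zends d) (fun g => g \in L) x y -> C' x y.
  by apply: conn_mono => g gL; rewrite mem_rcons in_cons gL orbT.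
have Cab : C' a b by apply: (conn1 _ (joins_z h)); rewrite mem_rcons in_cons eqxx.
have Eab x y : (a = x \/ b = x) -> (a = y \/ b = y) -> C' x y.
  case=> <-; case=> <-; by [apply: conn_refl|apply: conn_sym|].
have Hab : conn (@zends d) H a b by apply: conn1 Hh (joins_z h).
have EabH x y : (a = x \/ b = x) -> (a = y \/ b = y) -> conn (@zends d) H x y.
  case=> <-; case=> <-; by [apply: conn_refl|apply: conn_sym|].
have K x y : (a = x \/ b = x) -> touched L y -> conn (@zends d) H x y -> C' x y.
  move=> Ex ty Cxy; case: He => [Hone|Hfr].
    have [t [Et tt]] : exists t, (a = t \/ b = t) /\ touched L t.
      by case: Hone => [[t1 _]|[_ t2]]; [exists a; split; [left|]|exists b; split; [right|]].
    apply: conn_trans (Eab _ _ Ex Et) _; apply: mono; apply: CL => //.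
    exact: conn_trans (EabH _ _ Et Ex) Cxy.
  exfalso; apply: (Hfr y) => //; exact: conn_trans (EabH _ _ (or_introl erefl) Ex) Cxy.
move=> x y /touched_rcons tx /touched_rcons ty Cxy.
case: tx => [tx|Ex]; case: ty => [ty|Ey].
- exact/mono/CL.
- by apply: conn_sym; apply: K => //; exact: conn_sym.
- exact: K.
- exact: Eab.
Qed.

Lemma Inv_st k : Inv (st k).
Proof.
elim: k => [|k IH]; first by split=> // x y [g].
rewrite st_succ /stepL; case E: (next (st k)) => [h|//].
by apply: Inv_step => //; case: (next_some E).
Qed.

Lemma st_prefix j m : exists t, st (j + m) = st j ++ t.
Proof.
elim: m => [|m [t IH]]; first by exists [::]; rewrite addn0 cats0.
rewrite addnS st_succ /stepL IH; case: (next _) => [h|]; last by exists t.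
by exists (rcons t h); rewrite rcons_cat.
Qed.

Lemma touched_mono j j' x : (j <= j')%N -> touched (st j) x -> touched (st j') x.
Proof.
move=> /subnKC <-; have [t ->] := st_prefix j (j' - j); exact: touched_cat.
Qed.

Lemma count_contra k h : (forall j, (k <= j)%N -> elig (st j) h) -> False.
Proof.
move=> Hel.
have claim m : exists t, [/\ st (k + m) = st k ++ t, size t = m &
                  all (fun g => choice.pickle g <= choice.pickle h)%N t].
  elim: m => [|m [t [E1 E2 E3]]]; first by exists [::]; rewrite addn0 cats0.
  have El := Hel (k + m)%N (leq_addr _ _).
  case En: (next (st (k + m))) => [g|]; last by case: (next_none En El).
  have [_ Hmin] := next_some En.
  exists (rcons t g); split.
  - by rewrite addnS st_succ /stepL En E1 rcons_cat.
  - by rewrite size_rcons E2.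
  - by rewrite all_rcons Hmin // E3.
have [t [E1 E2 E3]] := claim (choice.pickle h).+2.
have [_ u _] := Inv_st (k + (choice.pickle h).+2).
move: u; rewrite E1 cat_uniq => /and3P [_ _ ut].
have ut' : uniq (map choice.pickle t) by rewrite map_inj_uniq //; exact: pcan_inj (@pickleK_inv (edge d)).
have sub : {subset map choice.pickle t <= iota 0 (choice.pickle h).+1}.
  move=> c /mapP [g gt ->]; rewrite mem_iota /= add0n ltnS.
  by move/allP: E3 => /(_ g gt).
have := uniq_leq_size ut' sub; rewrite size_map size_iota E2; lia.
Qed.

Definition elig1 L h := [/\ H h, h \notin L & one L h].

Lemma persist L h : Inv L -> elig1 L h -> h \in stepL L \/ elig1 (stepL L) h.
Proof.
move=> IL [Hh hL Ho]; rewrite /stepL.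
case En: (next L) => [g|]; last by case: (next_none En (And3 Hh hL (or_introl Ho))).
have [Eg _] := next_some En; have IL' := Inv_step IL Eg.
have [->|gh] := eqVneq g h; first by left; rewrite mem_rcons in_cons eqxx.
have hL' : h \notin rcons L h -> h \notin rcons L g.
  by move=> _; rewrite mem_rcons in_cons eq_sym (negPf gh).
right; split=> //; first by rewrite mem_rcons in_cons eq_sym (negPf gh).
have hnL' : h \notin rcons L g by rewrite mem_rcons in_cons eq_sym (negPf gh).
case: Ho => [[t1 _]|[_ t2]].
  have t1' : touched (rcons L g) (zends h).1 by apply/touched_rcons; left.
  by left; split=> // t2; apply: (both_touched IL' Hh hnL' t1' t2).
have t2' : touched (rcons L g) (zends h).2 by apply/touched_rcons; left.
by right; split=> // t1; apply: (both_touched IL' Hh hnL' t1 t2').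
Qed.

Lemma E1 k h : elig1 (st k) h -> exists j, h \in st j.
Proof.
move=> Eh; apply: NNPP => Nex.
have all m : elig1 (st (k + m)) h.
  elim: m => [|m IH]; first by rewrite addn0.
  rewrite addnS st_succ; case: (persist (Inv_st _) IH) => // hin.
  by exfalso; apply: Nex; exists (k + m).+1.
apply: (count_contra (k := k) (h := h)) => j kj.
have [Hh hL Ho] := all (j - k)%N; rewrite subnKC // in Hh hL Ho.
by split=> //; left.
Qed.

Lemma E2 h : H h -> exists k x, conn (@zends d) H (zends h).1 x /\ touched (st k) x.
Proof.
move=> Hh; apply: NNPP => Nex.
apply: (count_contra (k := 0) (h := h)) => j _.
have fr : freshc (st j) h by move=> x Cx tx; apply: Nex; exists j, x.
split=> //; last by right.
apply/negP => hin; apply: (fr (zends h).1); first exact: conn_refl.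
by exists h => //; left.
Qed.

Lemma E3 x y k : conn (@zends d) H x y -> touched (st k) y -> exists j, touched (st j) x.
Proof.
move=> C; elim: C k => [v|u v w g Hg Jg _ IH] k tw; first by exists k.
have [j tv] := IH k tw.
have [tu|ntu] := classic (touched (st j) u); first by exists j.
have gn : g \notin st j.
  apply/negP => gin; apply: ntu; exists g => //.
  by case: Jg => ->; [left|right].
have Eg : elig1 (st j) g.
  split=> //; rewrite /one; case: Jg => ->; [right|left] => //.
have [j' gin] := E1 Eg; exists j'; exists g => //.
by case: Jg => ->; [left|right].
Qed.

Lemma fair h : H h -> exists j, h \in st j.
Proof.
move=> Hh; have [k [x [Cx tx]]] := E2 Hh.
have [j ta] := E3 Cx tx.
have [hin|hn] := boolP (h \in st j); first by exists j.
have [tb|ntb] := classic (touched (st j) (zends h).2).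
  by case: (both_touched (Inv_st j) Hh hn ta tb).
by apply: (E1 (k := j)); split=> //; left.
Qed.


Definition Nopt : option nat :=
  match pselect (exists k, next (st k) == None) with
  | left ex => Some (ex_minn ex)
  | right _ => None
  end.
Definition Dom k := if Nopt is Some m then (k < m)%N else true.
Definition sq k := nth x0 (st k.+1) k.

Lemma stable_none m t : next (st m) = None -> st (m + t) = st m.
Proof.
move=> En; elim: t => [|t IH]; first by rewrite addn0.
by rewrite addnS st_succ /stepL IH En.
Qed.

Lemma size_st_le k : (size (st k) <= k)%N.
Proof.
elim: k => [//|k IH]; rewrite st_succ /stepL; case: (next _) => [h|].
  by rewrite size_rcons.
exact: leq_trans IH (leqnSn k).
Qed.

Lemma domP k : Dom k <-> next (st k) <> None.
Proof.
rewrite /Dom /Nopt; case: pselect => [ex|nex].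
  case: (ex_minnP ex) => m /eqP Hm Hmin; split.
    move=> km En; have := Hmin k (introT eqP En); lia.
  move=> Nk; rewrite ltnNge; apply/negP => mk; apply: Nk.
  by rewrite -(subnKC mk) stable_none.
by split=> // _ En; apply: nex; exists k; rewrite En.
Qed.

Lemma dom_down j k : Dom k -> (j <= k)%N -> Dom j.
Proof. by rewrite /Dom; case: Nopt => // m; lia. Qed.

Lemma size_dom k : Dom k -> size (st k) = k.
Proof.
elim: k => // k IH Dk; have Dk' := dom_down Dk (leqnSn k).
rewrite st_succ /stepL; have := (domP k).1 Dk'.
by case: (next _) => [h|//] _; rewrite size_rcons IH.
Qed.

Lemma s_next k : Dom k -> next (st k) = Some (sq k) /\ st k.+1 = rcons (st k) (sq k).
Proof.
move=> Dk; have := (domP k).1 Dk; rewrite /sq st_succ /stepL.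
case E: (next _) => [h|//] _.
by rewrite nth_rcons size_dom // ltnn eqxx.
Qed.

Lemma size_mono j j' : (j <= j')%N -> (size (st j) <= size (st j'))%N.
Proof.
move=> /subnKC <-; have [t ->] := st_prefix j (j' - j).
by rewrite size_cat leq_addr.
Qed.

Lemma lt_size_dom k j : (k < size (st j))%N -> Dom k.
Proof.
move=> kj; rewrite /Dom; case E: Nopt => [m|//].
move: E; rewrite /Nopt; case: pselect => [ex|//].
case: (ex_minnP ex) => m' /eqP Hm _ [Em]; subst m'.
have : (size (st j) <= m)%N.
  have [jm|mj] := leqP j m; first exact: leq_trans (size_st_le j) jm.
  by rewrite -(subnKC (ltnW mj)) stable_none // size_st_le.
lia.
Qed.

Lemma nth_stable k j j' : (k < size (st j))%N -> (j <= j')%N ->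
  nth x0 (st j') k = nth x0 (st j) k.
Proof.
move=> kj /subnKC <-; have [t ->] := st_prefix j (j' - j).
by rewrite nth_cat kj.
Qed.

Lemma s_in k j : Dom k -> (k < j)%N -> sq k = nth x0 (st j) k /\ (k < size (st j))%N.
Proof.
move=> Dk kj; have [_ E] := s_next Dk.
have Sk : (k < size (st k.+1))%N by rewrite E size_rcons size_dom.
split; first by rewrite /sq (nth_stable Sk kj).
exact: leq_trans Sk (size_mono kj).
Qed.

End Enum.

End Part5.

Unset Implicit Arguments.
Set Strict Implicit.

Theorem claim2p1 (R : realType) (d : nat)
    (p : {fset edge d} -> {fset edge d} -> R) (H : edge d -> Prop) :
  (1 <= d)%N ->
  is_WUSF p ->
  acyclic (@zends d) H ->
  exists (s : nat -> edge d) (N : option nat),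
    let dom := fun k : nat => if N is Some m then (k < m)%N else true in
    (forall k l, dom k -> dom l -> s k = s l -> k = l) /\
    (forall e, H e <-> exists k, dom k /\ s k = e) /\
    (forall n, dom n -> forall A B : {fset edge d},
        (A `|` B)%fset = [fset s k | k in iota 0 n]%fset ->
        (A `&` B)%fset = fset0 ->
        (2 * d)%:R^-1 * p A B <= p (s n |` A)%fset B).
Proof.
move=> d1 Hp Hac.
pose x0 : edge d := ([ffun => 0%R], Ordinal d1).
exists (sq H x0), (Nopt H) => dom.
have domE k : dom k = Dom H k by [].
split; [|split].
- move=> k l; rewrite !domE => Dk Dl E.
  have [Ek Sk] := s_in x0 Dk (leq_maxl k.+1 l.+1).
  have [El Sl] := s_in x0 Dl (leq_maxr k.+1 l.+1).
  have [_ u _] := Inv_st H (maxn k.+1 l.+1).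
  by apply/eqP; rewrite -(nth_uniq x0 Sk Sl u) -Ek -El E.
- move=> e; split.
    move=> He; have [j hin] := fair Hac He.
    have ks : (index e (st H j) < size (st H j))%N by rewrite index_mem.
    have Dk := lt_size_dom ks; exists (index e (st H j)); split=> //.
    have kj := leq_trans ks (size_st_le H j).
    by have [-> _] := s_in x0 Dk kj; rewrite nth_index.
  move=> [k [Dk <-]]; have [Ek Sk] := s_in x0 Dk (ltnSn k).
  by have [HL _ _] := Inv_st H k.+1; apply: HL; rewrite Ek mem_nth.
move=> n Dn A B EAB _.
have [En _] := s_next x0 Dn; have [[Hh hL Ho] _] := next_some En.
have [v [Hv ntv]] : exists v, ((zends (sq H x0 n)).1 = v \/ (zends (sq H x0 n)).2 = v)
                      /\ ~ touched (st H n) v.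
  case: Ho => [[[_ n2]|[n1 _]]|Hfr].
  + by exists (zends (sq H x0 n)).2; split=> //; right.
  + by exists (zends (sq H x0 n)).1; split=> //; left.
  + exists (zends (sq H x0 n)).1; split; first by left.
    by apply: Hfr; apply: conn_refl.
apply: (step_ineq (v := v)) => // g gAB.
have : g \in [fset sq H x0 k | k in iota 0 n]%fset by rewrite -EAB.
case/imfsetP => k /= kin ->; rewrite mem_iota add0n /= in kin.
have Dk := dom_down Dn (ltnW kin).
have [Ek Sk] := s_in x0 Dk kin.
have gin : sq H x0 k \in st H n by rewrite Ek mem_nth.
by split=> Hx; apply: ntv; exists (sq H x0 k) => //; [left|right].
Qed.
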